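(* Let $A$ be a real $2\times 2$ matrix and $B$ a real $1\times 2$ matrix, and let $\mathrm{NT}=\{\vec{x}\in\mathbb{R}^2 : BA^k\vec{x}>0 \text{ for all integers } k\ge 0\}$. Suppose $A$ has a positive eigenvalue and has an eigenvector $\vec{\alpha}$ with $B\vec{\alpha}=0$. If there is a vector $\vec{\xi}\in\mathbb{R}^2$ with $B\vec{\xi}>0$ and $BA\vec{\xi}\le 0$, then $\mathrm{NT}=\emptyset$.
   Context: $\mathrm{NT}$ is the non-termination set of the loop ''while $(B\vec{x}>0)$ $\{\vec{x}:=A\vec{x}\}$''. *)

(* Defs.v *)
From HB Require Import structures.
From mathcomp Require Import all_boot all_order all_algebra.
Set Implicit Arguments. Unset Strict Implicit. Unset Printing Implicit Defensive.
Import Order.TTheory GRing.Theory Num.Theory.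
Local Open Scope ring_scope.

(* Non-termination set of "while (B x > 0) { x := A x }":
   NT = { x | B A^k x > 0 for all k >= 0 }  (B A^k x is a 1x1 matrix). *)
Definition NT (R : realFieldType) (A : 'M[R]_2) (B : 'M[R]_(1, 2)) (x : 'cV[R]_2) : Prop :=
  forall k : nat, 0 < (B *m (A ^+ k) *m x) 0 0.

Definition col_eigenvector (R : realFieldType) (A : 'M[R]_2) (alpha : 'cV[R]_2) : Prop :=
  alpha != 0 /\ exists mu : R, A *m alpha = mu *: alpha.

(* Main.v *)
Require Import Defs.
From HB Require Import structures.
From mathcomp Require Import all_boot all_order all_algebra.
From mathcomp Require Import ring lra.
Import Order.TTheory GRing.Theory Num.Theory.
Local Open Scope ring_scope.

Lemma mul2 (R : realFieldType) m n (M : 'M[R]_(m,2)) (N : 'M[R]_(2,n)) i j :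
  (M *m N) i j = M i 0 * N 0 j + M i 1 * N 1 j.
Proof. rewrite mxE !big_ord_recl big_ord0 addr0.
have -> : lift ord0 (ord0 : 'I_1) = 1 :> 'I_2 by apply: val_inj.
by []. Qed.

Theorem lemma5 (R : realFieldType) (A : 'M[R]_2) (B : 'M[R]_(1, 2)) :
  (exists a : R, 0 < a /\ eigenvalue A a) ->
  (exists alpha : 'cV[R]_2, col_eigenvector A alpha /\ B *m alpha = 0) ->
  (exists xi : 'cV[R]_2, 0 < (B *m xi) 0 0 /\ (B *m A *m xi) 0 0 <= 0) ->
  forall x : 'cV[R]_2, ~ NT A B x.
Proof.
move=> _ [al [[alnz [mu Hmu]] Hb]] [xi [Hxi1 Hxi2]] x HNT.
have H0 := HNT 0%N; have H1 := HNT 1%N.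
rewrite expr0 mulmx1 in H0; rewrite expr1 in H1.
have Eb : (B *m al) 0 0 = 0 by rewrite Hb mxE.
have Ea0 : (A *m al) 0 0 = (mu *: al) 0 0 by rewrite Hmu.
have Ea1 : (A *m al) 1 0 = (mu *: al) 1 0 by rewrite Hmu.
have alnz' : al 0 0 != 0 \/ al 1 0 != 0.
  case: (eqVneq (al 0 0) 0) => h0; last by left.
  case: (eqVneq (al 1 0) 0) => h1; last by right.
  move/eqP: alnz; case; apply/matrixP => i j; rewrite mxE (ord1 j).
  by case: i => [[|[|]]] //= ? ; [rewrite -h0 | rewrite -h1]; congr (al _ _); apply: val_inj.
move: H0 H1 Hxi1 Hxi2 Eb Ea0 Ea1 alnz'.
rewrite !mul2 ?mxE ?mul2.
move: (A 0 0) (A 0 1) (A 1 0) (A 1 1) (B 0 0) (B 0 1) (al 0 0) (al 1 0) (x 0 0) (x 1 0) (xi 0 0) (xi 1 0) => a b c d b1 b2 a1 a2 x1 x2 y1 y2.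
move=> H0 H1 Hy1 Hy2 Eb Ea0 Ea1 anz.
have Eu : (b1 * a + b2 * c) * a1 + (b1 * b + b2 * d) * a2 = 0.
  transitivity (b1 * (a * a1 + b * a2) + b2 * (c * a1 + d * a2)); first ring.
  rewrite Ea0 Ea1; transitivity (mu * (b1 * a1 + b2 * a2)); first ring.
  by rewrite Eb mulr0.
move: H1 Hy2 Eu; move: (b1 * a + b2 * c) (b1 * b + b2 * d) => u1 u2 H1 Hy2 Eu.
have C1 : a1 * (u1 * b2 - u2 * b1) = 0.
  transitivity (b2 * (u1 * a1 + u2 * a2) - u2 * (b1 * a1 + b2 * a2)); first ring.
  by rewrite Eu Eb !mulr0 subr0.
have C2 : a2 * (u1 * b2 - u2 * b1) = 0.
  transitivity (u1 * (b1 * a1 + b2 * a2) - b1 * (u1 * a1 + u2 * a2)); first ring.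
  by rewrite Eu Eb !mulr0 subr0.
have C0 : u1 * b2 - u2 * b1 = 0.
  by case: anz => h; apply/eqP; [move/eqP: C1; rewrite mulf_eq0 (negbTE h) | move/eqP: C2; rewrite mulf_eq0 (negbTE h)].
have Id : (u1 * x1 + u2 * x2) * (b1 * y1 + b2 * y2) = (u1 * y1 + u2 * y2) * (b1 * x1 + b2 * x2).
  apply/eqP; rewrite -subr_eq0; apply/eqP.
  transitivity ((u1 * b2 - u2 * b1) * (x1 * y2 - x2 * y1)); first ring.
  by rewrite C0 mul0r.
have P1 : 0 < (u1 * x1 + u2 * x2) * (b1 * y1 + b2 * y2) by apply: mulr_gt0.
have P2 : (u1 * y1 + u2 * y2) * (b1 * x1 + b2 * x2) <= 0 by apply: mulr_le0_ge0 => //; apply: ltW.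
by move: P1; rewrite Id => P1; move: (lt_le_trans P1 P2); rewrite ltxx.
Qed.
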